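(* Let $\mathcal{M}$ be the BST merge of a BST mergesort algorithm and let $\pi$ be a permutation of $\{1,\dots,n\}$, plotted as the points $(i,\pi_i)$. The arboral mergesort on $\pi$ returns an arborally satisfied set (containing all points $(i,\pi_i)$).
   Context: Points: horizontal axis is time (input position), vertical axis is key. A set $P$ of points is arborally satisfied if for every two points $x,y\in P$ not on a common horizontal or vertical line, the rectangle with corners $x,y$ contains a point of $P$ other than $x,y$. A top tree of a binary tree is a connected set of nodes containing the root. A BST merge $\mathcal{M}$ takes BSTs $T_A,T_B$ with disjoint keys and, for some top trees $\tau_a$ of $T_A$ and $\tau_b$ of $T_B$, returns a BST $T$ on the union of keys with a top tree $\tau=\tau_a\cup\tau_b$, the subtrees of $T$ hanging off $\tau$ being unchanged subtrees of $T_A$ or $T_B$, and $\tau$ containing the block boundaries (in the sorted merged order, blocks are maximal runs of keys from one input; boundaries are their first and last keys); the keys accessed by the merge are those of $\tau$. A BST mergesort recursively splits the input sequence into two contiguous nonempty parts, sorts each (singletons being one-node BSTs), and BST-merges the results. Arboral mergesort: it follows the same recursion as the BST mergesort on $\pi$; a part of size one is the single point $(i,\pi_i)$. To combine the point sets $A$ (left part) and $B$ (right part): if one is empty return the other; otherwise let $C$ be $A$ and $B$ placed side by side on the time axis, let $S$ be the set of keys accessed by $\mathcal{M}$ when merging the BSTs produced by the mergesort for these two parts, and add the points $(c,s)$ for all $s\in S$ and for each of three columns $c$: the first column of $C$, the rightmost column of $A$, and the last column of $C$. Return the resulting set. *)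

(* Defs.v *)
From mathcomp Require Import all_boot.
Set Implicit Arguments. Unset Strict Implicit. Unset Printing Implicit Defensive.

Inductive tree := Leaf | Node of tree & nat & tree.

Fixpoint keys (t : tree) : seq nat :=
  match t with Leaf => [::] | Node l k r => keys l ++ k :: keys r end.

Definition bst (t : tree) : bool := sorted ltn (keys t).

Definition root_key (t : tree) : option nat :=
  if t is Node _ k _ then Some k else None.

Inductive subtree : tree -> tree -> Prop :=
| st_refl t : subtree t t
| st_left s l k r : subtree s l -> subtree s (Node l k r)
| st_right s l k r : subtree s r -> subtree s (Node l k r).

(* A top tree of t (a connected set of nodes containing the root), given by
   its set of keys S (keys of a BST are distinct, so nodes = keys). *)
Definition top_tree (t : tree) (S : pred nat) : Prop :=
  [/\ forall x, S x -> x \in keys t,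
      (if root_key t is Some k then S k else False) &
      forall l k r, subtree (Node l k r) t ->
        forall c, (c = l \/ c = r) ->
          forall k', root_key c = Some k' -> S k' -> S k].

Definition block_boundary (A B : seq nat) (x : nat) : Prop :=
  let s := sort leq (A ++ B) in
  exists2 i, i < size s &
    nth 0 s i = x /\
    [|| i == 0, i.+1 == size s,
        (nth 0 s i.-1 \in A) != (x \in A) | (nth 0 s i.+1 \in A) != (x \in A)].

(* A BST merge: a function returning the merged tree and the accessed keys. *)
Definition merge_fun := tree -> tree -> tree * seq nat.

Definition is_bst_merge (M : merge_fun) : Prop :=
  forall TA TB, bst TA -> bst TB -> TA <> Leaf -> TB <> Leaf ->
    (forall x, x \in keys TA -> x \notin keys TB) ->
    let T := (M TA TB).1 in
    let S := (M TA TB).2 in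
    [/\ bst T,
        forall x, (x \in keys T) = (x \in keys TA) || (x \in keys TB) &
        exists (Sa Sb : pred nat),
          [/\ top_tree TA Sa /\ top_tree TB Sb,
              forall x, (x \in S) <-> (Sa x \/ Sb x),
              top_tree T (fun x => x \in S),
              (* subtrees hanging off tau are unchanged subtrees of TA or TB *)
              forall l k r, subtree (Node l k r) T -> k \in S ->
                forall c, (c = l \/ c = r) ->
                  forall k', root_key c = Some k' -> k' \notin S ->
                    subtree c TA \/ subtree c TB &
              forall x, block_boundary (keys TA) (keys TB) x -> x \in S]].

(* The recursion of a BST mergesort on a fixed input is a full binary tree
   of splits; leaves are the singleton parts (left to right). *)
Inductive split_tree := SLeaf | SNode of split_tree & split_tree.

Fixpoint nleaves (st : split_tree) : nat :=
  match st with SLeaf => 1 | SNode a b => nleaves a + nleaves b end.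

(* The BST mergesort on the part of pi starting at 0-based position off. *)
Fixpoint bst_mergesort (M : merge_fun) (pi : seq nat) (st : split_tree)
  (off : nat) : tree :=
  match st with
  | SLeaf => Node Leaf (nth 0 pi off) Leaf
  | SNode a b =>
      (M (bst_mergesort M pi a off)
         (bst_mergesort M pi b (off + nleaves a))).1
  end.

(* Points (time, key); time i is the 1-based input position. *)
Definition point := (nat * nat)%type.

Fixpoint arboral_mergesort (M : merge_fun) (pi : seq nat) (st : split_tree)
  (off : nat) : seq point :=
  match st with
  | SLeaf => [:: (off.+1, nth 0 pi off)]
  | SNode a b =>
      let A := arboral_mergesort M pi a off in
      let B := arboral_mergesort M pi b (off + nleaves a) in
      let S := (M (bst_mergesort M pi a off)
                  (bst_mergesort M pi b (off + nleaves a))).2 in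
      let c1 := off.+1 in
      let c2 := off + nleaves a in                (* rightmost column of A *)
      let c3 := off + nleaves a + nleaves b in
      if A == [::] then B else if B == [::] then A else
      A ++ B ++ [seq (c1, s) | s <- S] ++ [seq (c2, s) | s <- S]
        ++ [seq (c3, s) | s <- S]
  end.

Definition arborally_satisfied (P : seq point) : Prop :=
  forall x y, x \in P -> y \in P -> x.1 != y.1 -> x.2 != y.2 ->
    exists2 z, z \in P &
      [/\ z != x, z != y,
          minn x.1 y.1 <= z.1 <= maxn x.1 y.1 &
          minn x.2 y.2 <= z.2 <= maxn x.2 y.2].

(* Main.v *)
Require Import Defs.
From mathcomp Require Import all_boot zify.
Set Implicit Arguments. Unset Strict Implicit. Unset Printing Implicit Defensive.

Definition anc (T : tree) (a k : nat) : Prop :=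
  exists L R, subtree (Node L a R) T /\ (k \in keys L \/ k \in keys R).

Definition clos (T : tree) (Q : pred nat) : Prop :=
  forall l k r, subtree (Node l k r) T -> forall c, (c = l \/ c = r) ->
    forall k', root_key c = Some k' -> Q k' -> Q k.

Lemma subtree_trans a b c : subtree a b -> subtree b c -> subtree a c.
Proof.
move=> Hab Hbc; elim: Hbc Hab => [t|s l k r _ IH|s l k r _ IH] H //.
- by apply: st_left; apply: IH.
- by apply: st_right; apply: IH.
Qed.

Lemma sub_l l k r : subtree l (Node l k r).
Proof. by apply: st_left; apply: st_refl. Qed.
Lemma sub_r l k r : subtree r (Node l k r).
Proof. by apply: st_right; apply: st_refl. Qed.

Lemma subtree_inv c L x R : subtree c (Node L x R) ->
  c = Node L x R \/ subtree c L \/ subtree c R.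
Proof. move=> H; inversion H; subst; auto. Qed.

Lemma subtree_leaf c : subtree c Leaf -> c = Leaf.
Proof. move=> H; inversion H; auto. Qed.

Lemma keys_sub c t : subtree c t -> exists p q, keys t = p ++ keys c ++ q.
Proof.
elim=> [t'|s l k r _ [p [q E]]|s l k r _ [p [q E]]].
- by exists [::], [::]; rewrite cats0.
- by exists p, (q ++ k :: keys r); rewrite /= E -!catA.
- by exists (keys l ++ k :: p), q; rewrite /= E -catA.
Qed.

Lemma sub_keys c t : subtree c t -> {subset keys c <= keys t}.
Proof. by move=> /keys_sub [p [q ->]] x Hx; rewrite !mem_cat Hx orbT. Qed.

Lemma bstP t : bst t = pairwise ltn (keys t).
Proof. by rewrite /bst sorted_pairwise //; exact: ltn_trans. Qed.

Lemma bst_sub c t : subtree c t -> bst t -> bst c.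
Proof.
by move=> /keys_sub [p [q E]]; rewrite !bstP E !pairwise_cat => /and3P [_ _ /and3P [_ ? _]].
Qed.

Lemma bst_node L a R : bst (Node L a R) ->
  [/\ bst L, bst R, forall x, x \in keys L -> x < a & forall x, x \in keys R -> a < x].
Proof.
rewrite !bstP /= pairwise_cat pairwise_cons allrel_consr => /and3P [/andP [H1 H2] HL /andP [Ha HR]].
split => // x Hx; [exact: (allP H1 x Hx) | exact: (allP Ha x Hx)].
Qed.

Lemma bst_uniq t : bst t -> uniq (keys t).
Proof. by rewrite bstP; apply: pairwise_uniq; exact: ltnn. Qed.

Lemma anc_lift c T a k : subtree c T -> anc c a k -> anc T a k.
Proof. by move=> Hc [L [R [Hs Hk]]]; exists L, R; split => //; apply: subtree_trans Hs Hc. Qed.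

Lemma clos_sub c T Q : subtree c T -> clos T Q -> clos c Q.
Proof. by move=> Hc HC l k r Hs; apply: HC; apply: subtree_trans Hs Hc. Qed.

Lemma anc_neq T a k : bst T -> anc T a k -> a != k.
Proof.
move=> HT [L [R [Hs Hk]]]; have /bst_node [_ _ HL HR] := bst_sub Hs HT.
by case: Hk => [/HL|/HR]; rewrite neq_ltn => ->; rewrite ?orbT.
Qed.

Lemma nonQ_desc T Q h : clos T Q -> subtree h T ->
  (forall k', root_key h = Some k' -> ~~ Q k') -> forall a, a \in keys h -> ~~ Q a.
Proof.
move=> HC; elim: h => [|L IHL x R IHR] Hs Hr a //=.
rewrite mem_cat inE => /orP [aL|/orP [/eqP->|aR]].
- apply: IHL aL; first by apply: subtree_trans (sub_l _ _ _) Hs.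
  move=> k' Hk'; apply/negP => HQ; move/negP: (Hr x erefl); apply.
  exact: (HC L x R Hs L (or_introl erefl) k' Hk' HQ).
- exact: Hr.
- apply: IHR aR; first by apply: subtree_trans (sub_r _ _ _) Hs.
  move=> k' Hk'; apply/negP => HQ; move/negP: (Hr x erefl); apply.
  exact: (HC L x R Hs R (or_intror erefl) k' Hk' HQ).
Qed.

Lemma anc_up T Q a k : clos T Q -> anc T a k -> Q k -> Q a.
Proof.
move=> HC [L [R [Hs Hk]]] Qk.
have key : forall c, (c = L \/ c = R) -> k \in keys c -> Q a.
  move=> c Hc kc; case Ec: c => [|c1 y c2]; first by rewrite Ec in kc.
  case: (boolP (Q y)) => Qy.
    by apply: (HC L a R Hs c Hc y); rewrite ?Ec.
  have Hcs : subtree c T by case: Hc => ->; [apply: subtree_trans (sub_l _ _ _) Hs | apply: subtree_trans (sub_r _ _ _) Hs].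
  have H0 : forall k', root_key c = Some k' -> ~~ Q k' by move=> k'; rewrite Ec => -[<-].
  by move: (nonQ_desc HC Hcs H0 kc); rewrite Qk.
by case: Hk => Hk; [apply: (key L) | apply: (key R)]; auto.
Qed.

Lemma anc_of_top T Q s k : bst T -> clos T Q ->
  (forall r, root_key T = Some r -> Q r) ->
  s \in keys T -> k \in keys T -> Q s -> ~~ Q k ->
  (forall q, Q q -> ~~ ((s < q < k) || (k < q < s))) -> anc T s k.
Proof.
elim: T => [|L IHL x R IHR] HT HC Hr //= sT kT Qs Qk Hq.
have Qx := Hr x erefl.
have [bL bR HL HR] := bst_node HT.
have Hroot : forall c, (c = L \/ c = R) -> s \in keys c -> forall r0, root_key c = Some r0 -> Q r0.
  move=> c Hc sc r0 Hr0; apply/negPn/negP => Qr0.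
  have Hcs : subtree c (Node L x R) by case: Hc => ->; [apply: sub_l | apply: sub_r].
  have H0 : forall k', root_key c = Some k' -> ~~ Q k' by move=> k'; rewrite Hr0 => -[<-].
  by move: (nonQ_desc HC Hcs H0 sc); rewrite Qs.
move: sT kT; rewrite !mem_cat !inE.
move=> /orP [sL|/orP [/eqP Es|sR]] /orP [kL|/orP [/eqP Ek|kR]].
- apply: anc_lift (sub_l _ _ _) _; apply: IHL => //.
  + exact: clos_sub (sub_l _ _ _) HC.
  + exact: (Hroot L (or_introl erefl) sL).
- by rewrite Ek Qx in Qk.
- by have := Hq x Qx; have := HL s sL; have := HR k kR; lia.
- by exists L, R; rewrite Es; split; [apply: st_refl | left].
- by rewrite Ek Qx in Qk.
- by exists L, R; rewrite Es; split; [apply: st_refl | right].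
- by have := Hq x Qx; have := HL k kL; have := HR s sR; lia.
- by rewrite Ek Qx in Qk.
- apply: anc_lift (sub_r _ _ _) _; apply: IHR => //.
  + exact: clos_sub (sub_r _ _ _) HC.
  + exact: (Hroot R (or_intror erefl) sR).
Qed.

Lemma hanging T Q c a : clos T Q -> (forall r, root_key T = Some r -> Q r) ->
  subtree c T -> root_key c = Some a -> ~~ Q a ->
  exists l' b r' g, [/\ subtree (Node l' b r') T, Q b, (g = l' \/ g = r'),
     (exists k', root_key g = Some k' /\ ~~ Q k') & subtree c g].
Proof.
elim: T => [|L IHL x R IHR] HC Hr Hs Hc Qa.
  by move/subtree_leaf: Hs => E; rewrite E in Hc.
have Qx := Hr x erefl.
case/subtree_inv: Hs => [E|[Hs|Hs]].
- by rewrite E in Hc; case: Hc => E'; rewrite -E' Qx in Qa.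
- case EL: L => [|L1 y L2]; first by rewrite EL in Hs; move/subtree_leaf: Hs => E; rewrite E in Hc.
  case: (boolP (Q y)) => Qy.
  + have [l' [b [r' [g [H1 H2 H3 H4 H5]]]]] :
      exists l' b r' g, [/\ subtree (Node l' b r') L, Q b, (g = l' \/ g = r'),
        (exists k', root_key g = Some k' /\ ~~ Q k') & subtree c g].
      apply: IHL => //; first exact: clos_sub (sub_l _ _ _) HC.
      by move=> r0; rewrite EL => -[<-].
    exists l', b, r', g; split => //; rewrite -EL; apply: subtree_trans H1 (sub_l _ _ _).
  + exists (Node L1 y L2), x, R, (Node L1 y L2); split; [exact: st_refl | exact: Qx | by left | by exists y | by rewrite -EL].
- case ER: R => [|R1 z R2]; first by rewrite ER in Hs; move/subtree_leaf: Hs => E; rewrite E in Hc.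
  case: (boolP (Q z)) => Qy.
  + have [l' [b [r' [g [H1 H2 H3 H4 H5]]]]] :
      exists l' b r' g, [/\ subtree (Node l' b r') R, Q b, (g = l' \/ g = r'),
        (exists k', root_key g = Some k' /\ ~~ Q k') & subtree c g].
      apply: IHR => //; first exact: clos_sub (sub_r _ _ _) HC.
      by move=> r0; rewrite ER => -[<-].
    exists l', b, r', g; split => //; rewrite -ER; apply: subtree_trans H1 (sub_r _ _ _).
  + exists L, x, (Node R1 z R2), (Node R1 z R2); split; [exact: st_refl | exact: Qx | by right | by exists z | by rewrite -ER].
Qed.

Ltac nlia :=
  repeat match goal with
  | H : ?T |- _ =>
     lazymatch T with
     | is_true (leq _ _) => fail
     | is_true (andb _ _) => fail
     | is_true (orb _ _) => fail
     | @eq nat _ _ => fail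
     | nat => fail
     | _ => clear H
     end
  end; lia.

Lemma block_switch (KA KB S : seq nat) u v :
  uniq KA -> uniq KB -> (forall x, x \in KA -> x \notin KB) ->
  (forall x, block_boundary KA KB x -> x \in S) ->
  u \in KA ++ KB -> v \in KA ++ KB -> u < v -> (u \in KA) != (v \in KA) ->
  exists b1 b2, [/\ b1 \in S, b2 \in S, u <= b1 < b2, b2 <= v & (b1 \in KA) != (b2 \in KA)].
Proof.
move=> uA uB dis bnd uin vin uv side.
set s := sort leq (KA ++ KB).
have us : uniq s.
  rewrite sort_uniq cat_uniq uA uB andbT; apply/hasPn => x /= xB; apply/negP => xA.
  by move: (dis x xA); rewrite xB.
have ss : sorted leq s := sort_sorted leq_total _.
have sl : sorted ltn s by rewrite ltn_sorted_uniq_leq us ss.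
have sm : forall x, (x \in s) = (x \in KA ++ KB) := mem_sort leq _.
have iS : index u s < size s by rewrite index_mem sm.
have jS : index v s < size s by rewrite index_mem sm.
have ni : nth 0 s (index u s) = u by apply: nth_index; rewrite sm.
have nj : nth 0 s (index v s) = v by apply: nth_index; rewrite sm.
move: (index u s) (index v s) iS jS ni nj => i j iS jS ni nj.
have mono : forall a b, a <= b -> b < size s -> nth 0 s a <= nth 0 s b.
  move=> a b ab bs; apply: (sorted_leq_nth leq_trans leqnn 0 ss) => //; rewrite inE; nlia.
have smono : forall a b, a < b -> b < size s -> nth 0 s a < nth 0 s b.
  move=> a b ab bs; apply: (sorted_ltn_nth ltn_trans 0 sl) => //; rewrite inE; nlia.
have ij : i < j.
  rewrite ltnNge; apply/negP => ji; have := mono _ _ ji iS; rewrite ni nj; nlia.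
have step : forall d i0, i0 + d.+1 = j -> (nth 0 s i0 \in KA) != (nth 0 s j \in KA) ->
   exists2 p, i0 <= p < j & (nth 0 s p \in KA) != (nth 0 s p.+1 \in KA).
  elim=> [|d IH] i0 E H.
  - exists i0; first nlia.
    by have -> : i0.+1 = j by nlia.
  - case: (boolP ((nth 0 s i0 \in KA) != (nth 0 s i0.+1 \in KA))) => H'.
    + by exists i0 => //; nlia.
    + have E1 : i0.+1 + d.+1 = j by nlia.
      have H1 : (nth 0 s i0.+1 \in KA) != (nth 0 s j \in KA) by move/negPn/eqP: H' => E'; rewrite -E'.
      have [p Hp Hp'] := IH i0.+1 E1 H1.
      by exists p => //; nlia.
have E0 : i + (j - i).-1.+1 = j by nlia.
have [p Hp sw] := step (j - i).-1 i E0 ltac:(by rewrite ni nj).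
have sw' : (nth 0 s p.+1 \in KA) != (nth 0 s p \in KA) by rewrite eq_sym.
exists (nth 0 s p), (nth 0 s p.+1); split.
- apply: bnd; rewrite /block_boundary -/s; exists p; first nlia.
  by split => //; rewrite sw' !orbT.
- apply: bnd; rewrite /block_boundary -/s; exists p.+1; first nlia.
  by split => //=; rewrite sw !orbT.
- apply/andP; split; first by rewrite -ni; apply: mono; nlia.
  apply: smono; nlia.
- rewrite -nj; apply: mono; nlia.
- exact: sw.
Qed.

Definition good (X : seq point) (x y : point) :=
  exists2 z, z \in X & [/\ z != x, z != y, minn x.1 y.1 <= z.1 <= maxn x.1 y.1
                         & minn x.2 y.2 <= z.2 <= maxn x.2 y.2].

Definition Inv (X : seq point) (T : tree) (l r : nat) : Prop :=
  [/\ forall y, y \in X -> (y.2 \in keys T) /\ (l <= y.1 <= r),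
      forall x y, x \in X -> y \in X -> x.1 != y.1 -> x.2 != y.2 -> good X x y,
      forall k a, (l,k) \in X -> anc T a k -> (l,a) \in X,
      forall k a, (r,k) \in X -> anc T a k -> (r,a) \in X &
      (forall t k s, (t,k) \in X -> l < t -> anc T s k ->
         exists2 y, y \in X & [/\ y != (t,k), y != (l,s), l <= y.1 <= t & minn s k <= y.2 <= maxn s k]) /\
      (forall t k s, (t,k) \in X -> t < r -> anc T s k ->
         exists2 y, y \in X & [/\ y != (t,k), y != (r,s), t <= y.1 <= r & minn s k <= y.2 <= maxn s k])].

Lemma good_sym X x y : good X x y -> good X y x.
Proof. by case=> z zX [H1 H2 H3 H4]; exists z => //; split => //; rewrite minnC maxnC. Qed.

Lemma pne1 (a b c d : nat) : a != c -> (a,b) != (c,d).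
Proof. by move=> H; apply/eqP => -[E _]; rewrite E eqxx in H. Qed.
Lemma pne2 (a b c d : nat) : b != d -> (a,b) != (c,d).
Proof. by move=> H; apply/eqP => -[_ E]; rewrite E eqxx in H. Qed.

Lemma mem_cpts (c : nat) (S : seq nat) (y : point) :
  (y \in [seq (c, s) | s <- S]) = (y.1 == c) && (y.2 \in S).
Proof.
case: y => a b /=; apply/mapP/andP => [[s sS [-> ->]] | [/eqP -> bS]]; first by [].
by exists b.
Qed.

Section Merge.
Variables (A B : seq point) (TA TB T : tree) (S : seq nat) (l m r : nat) (Sa Sb : pred nat).
Hypotheses (Hlm : l <= m) (Hmr : m < r) (IA : Inv A TA l m) (IB : Inv B TB m.+1 r)
  (bA : bst TA) (bB : bst TB) (bT : bst T)
  (dis : forall x, x \in keys TA -> x \notin keys TB)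
  (kT : forall x, (x \in keys T) = (x \in keys TA) || (x \in keys TB))
  (tA : top_tree TA Sa) (tB : top_tree TB Sb) (SE : forall x, x \in S <-> Sa x \/ Sb x)
  (tT : top_tree T (fun x => x \in S))
  (hg : forall l0 k r0, subtree (Node l0 k r0) T -> k \in S ->
          forall c, (c = l0 \/ c = r0) -> forall k', root_key c = Some k' -> k' \notin S ->
          subtree c TA \/ subtree c TB)
  (bnd : forall x, block_boundary (keys TA) (keys TB) x -> x \in S).

Definition NN := [seq (l, s) | s <- S] ++ [seq (m, s) | s <- S] ++ [seq (r, s) | s <- S].
Definition XX := A ++ B ++ NN.

Lemma inA y : y \in A -> y \in XX.
Proof. by rewrite /XX mem_cat => ->. Qed.
Lemma inB y : y \in B -> y \in XX.
Proof. by rewrite /XX !mem_cat => ->; rewrite orbT. Qed.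
Lemma inN c s : s \in S -> (c = l \/ c = m \/ c = r) -> (c, s) \in XX.
Proof.
move=> sS Hc; rewrite /XX /NN !mem_cat !mem_cpts /= sS !andbT.
by case: Hc => [->|[->|->]]; rewrite eqxx ?orbT.
Qed.
Lemma memX y : y \in XX -> [\/ y \in A, y \in B | (y.2 \in S) /\ (y.1 = l \/ y.1 = m \/ y.1 = r)].
Proof.
rewrite /XX /NN !mem_cat !mem_cpts => /orP [->|/orP [->|H]]; [by constructor 1 | by constructor 2|].
constructor 3; move: H => /orP [/andP [/eqP -> ->]|/orP [/andP [/eqP -> ->]|/andP [/eqP -> ->]]]; auto.
Qed.

Lemma kA y : y \in A -> (y.2 \in keys TA) /\ (l <= y.1 <= m).
Proof. by case: IA => H _ _ _ _; apply: H. Qed.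
Lemma kB y : y \in B -> (y.2 \in keys TB) /\ (m.+1 <= y.1 <= r).
Proof. by case: IB => H _ _ _ _; apply: H. Qed.

Lemma SkT s : s \in S -> s \in keys T.
Proof. by case: tT => H _ _; apply: H. Qed.
Lemma closT : clos T (fun x => x \in S).
Proof. by case: tT. Qed.
Lemma rootT : forall r0, root_key T = Some r0 -> r0 \in S.
Proof. by case: tT => _ H _ r0 E; rewrite E in H. Qed.
Lemma closA : clos TA Sa.
Proof. by case: tA. Qed.
Lemma rootA : forall r0, root_key TA = Some r0 -> Sa r0.
Proof. by case: tA => _ H _ r0 E; rewrite E in H. Qed.
Lemma closB : clos TB Sb.
Proof. by case: tB. Qed.
Lemma rootB : forall r0, root_key TB = Some r0 -> Sb r0.
Proof. by case: tB => _ H _ r0 E; rewrite E in H. Qed.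

Lemma SaE x : Sa x <-> (x \in S) /\ (x \in keys TA).
Proof.
split.
- move=> H; split; first by apply/SE; left.
  by case: tA => H' _ _; apply: H'.
- case=> /SE [//|H] xA; case: tB => H' _ _; move: (H' _ H) (dis xA) => ->; by [].
Qed.
Lemma SbE x : Sb x <-> (x \in S) /\ (x \in keys TB).
Proof.
split.
- move=> H; split; first by apply/SE; right.
  by case: tB => H' _ _; apply: H'.
- case=> /SE [H|//] xB; case: tA => H' _ _; move: (dis (H' _ H)); rewrite xB; by [].
Qed.

Lemma same_side s k : s \in S -> k \in keys T -> k \notin S ->
  (forall q, q \in S -> ~~ ((s < q < k) || (k < q < s))) ->
  (s \in keys TA) = (k \in keys TA).
Proof.
move=> sS kT' kS hq; apply/eqP/negPn/negP => side.
have sT := SkT sS.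
have uA := bst_uniq bA; have uB := bst_uniq bB.
have mT : forall x, x \in keys T -> x \in keys TA ++ keys TB by move=> x; rewrite mem_cat -kT.
case: (ltngtP s k) => sk.
- have [b1 [b2 [H1 H2 H3 H4 _]]] := block_switch uA uB dis bnd (mT _ sT) (mT _ kT') sk side.
  have b2k : b2 != k by apply/eqP => E; rewrite -E H2 in kS.
  by move: (hq b2 H2); move: H3 H4 b2k; clear; lia.
- have side' : (k \in keys TA) != (s \in keys TA) by rewrite eq_sym.
  have [b1 [b2 [H1 H2 H3 H4 _]]] := block_switch uA uB dis bnd (mT _ kT') (mT _ sT) sk side'.
  have b1k : b1 != k by apply/eqP => E; rewrite -E H1 in kS.
  by move: (hq b1 H1); move: H3 H4 b1k; clear; lia.
- by rewrite -sk sS in kS.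
Qed.

Lemma anc_sideS_A s k : s \in S -> k \in keys TA -> k \notin S ->
  (forall q, q \in S -> ~~ ((s < q < k) || (k < q < s))) -> anc TA s k.
Proof.
move=> sS kA' kS hq.
have kT' : k \in keys T by rewrite kT kA'.
have sA : s \in keys TA by rewrite (same_side sS kT' kS hq).
apply: (anc_of_top (Q := Sa)) => //.
- exact: closA.
- exact: rootA.
- by apply/SaE.
- by apply/negP => /SaE [H _]; rewrite H in kS.
- by move=> q /SaE [qS _]; apply: hq.
Qed.

Lemma anc_sideS_B s k : s \in S -> k \in keys TB -> k \notin S ->
  (forall q, q \in S -> ~~ ((s < q < k) || (k < q < s))) -> anc TB s k.
Proof.
move=> sS kB' kS hq.
have kT' : k \in keys T by rewrite kT kB' orbT.
have kA' : k \notin keys TA by apply/negP => /dis; rewrite kB'.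
have sB : s \in keys TB.
  have := same_side sS kT' kS hq; rewrite (negbTE kA') => sA.
  by move: (SkT sS); rewrite kT sA.
apply: (anc_of_top (Q := Sb)) => //.
- exact: closB.
- exact: rootB.
- by apply/SbE.
- by apply/negP => /SbE [H _]; rewrite H in kS.
- by move=> q /SbE [qS _]; apply: hq.
Qed.

Lemma anc_sideN s k : s \notin S -> anc T s k ->
  (k \in keys TA -> anc TA s k) /\ (k \in keys TB -> anc TB s k).
Proof.
move=> sS [L [R [Hs Hk]]].
have [l' [b [r' [g [H1 H2 H3 [k' [H4 H5]]] H6]]]] :=
  hanging closT rootT Hs (erefl (Some s)) sS.
have kg : k \in keys g.
  apply: (sub_keys H6); rewrite /= mem_cat inE.
  by case: Hk => ->; rewrite ?orbT.
case: (hg H1 H2 H3 H4 H5) => Hg; split => kX.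
- by exists L, R; split => //; apply: subtree_trans H6 Hg.
- by move: (dis (sub_keys Hg kg)); rewrite kX.
- by move: (dis kX); rewrite (sub_keys Hg kg).
- by exists L, R; split => //; apply: subtree_trans H6 Hg.
Qed.

Lemma anc_side s k : anc T s k -> k \notin S ->
  (forall q, q \in S -> ~~ ((s < q < k) || (k < q < s))) ->
  (k \in keys TA -> anc TA s k) /\ (k \in keys TB -> anc TB s k).
Proof.
move=> Ha kS hq; case: (boolP (s \in S)) => sS.
- by split => kX; [apply: anc_sideS_A | apply: anc_sideS_B].
- exact: anc_sideN.
Qed.

Lemma sat_AB x y : x \in A -> y \in B -> x.2 != y.2 -> good XX x y.
Proof.
case: x => t1 k1; case: y => t2 k2 /= xA yB kne.
move: (kA xA) => /= [k1A /andP [t1l t1m]].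
move: (kB yB) => /= [k2B /andP [t2l t2r]].
have k2A : k2 \notin keys TA by apply/negP => /dis; rewrite k2B.
have uA := bst_uniq bA; have uB := bst_uniq bB.
have m1 : k1 \in keys TA ++ keys TB by rewrite mem_cat k1A.
have m2 : k2 \in keys TA ++ keys TB by rewrite mem_cat k2B orbT.
have fin : forall b, b \in S -> b \notin keys TA -> minn k1 k2 <= b <= maxn k1 k2 ->
    good XX (t1,k1) (t2,k2).
  move=> b bS bA' hb; exists (m, b); first by apply: inN => //; auto.
  split => //=.
  - by apply: pne2; apply/eqP => E; rewrite E k1A in bA'.
  - by apply: pne1; move: t2l; clear; lia.
  - by move: t1m t2l; clear; lia.
case: (ltngtP k1 k2) => kk.
- have side : (k1 \in keys TA) != (k2 \in keys TA) by rewrite k1A (negbTE k2A).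
  have [b1 [b2 [H1 H2 H3 H4 H5]]] := block_switch uA uB dis bnd m1 m2 kk side.
  case: (boolP (b1 \in keys TA)) => b1A.
  + apply: (fin b2 H2); first by move: H5; rewrite b1A; case: (b2 \in keys TA).
    by move: H3 H4 kk; clear; lia.
  + by apply: (fin b1 H1 b1A); move: H3 H4 kk; clear; lia.
- have side : (k2 \in keys TA) != (k1 \in keys TA) by rewrite k1A (negbTE k2A).
  have [b1 [b2 [H1 H2 H3 H4 H5]]] := block_switch uA uB dis bnd m2 m1 kk side.
  case: (boolP (b1 \in keys TA)) => b1A.
  + apply: (fin b2 H2); first by move: H5; rewrite b1A; case: (b2 \in keys TA).
    by move: H3 H4 kk; clear; lia.
  + by apply: (fin b1 H1 b1A); move: H3 H4 kk; clear; lia.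
- by rewrite kk eqxx in kne.
Qed.

Lemma sat_NN x y : (x.2 \in S) /\ (x.1 = l \/ x.1 = m \/ x.1 = r) ->
  (y.2 \in S) /\ (y.1 = l \/ y.1 = m \/ y.1 = r) -> x.1 != y.1 -> x.2 != y.2 -> good XX x y.
Proof.
case: x => a b; case: y => c d /= [bS Ha] [dS Hc] ac bd.
exists (a, d); first exact: inN.
split => /=; [by apply: pne2; rewrite eq_sym | exact: pne1 | clear; lia | clear; lia].
Qed.

Lemma sat_ON x z : (x \in A) \/ (x \in B) -> (z.2 \in S) /\ (z.1 = l \/ z.1 = m \/ z.1 = r) ->
  x.1 != z.1 -> x.2 != z.2 -> good XX x z.
Proof.
case: x => t k; case: z => c s /= xAB [sS Hc] tc ks.
case: (boolP (k \in S)) => kS.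
  exists (c, k); first exact: inN.
  split => /=; [by apply: pne1; rewrite eq_sym | exact: pne2 | |]; apply/andP; split; clear; lia.
case: (boolP (has (fun q => (s < q < k) || (k < q < s)) S)) => hq.
  case/hasP: hq => q qS hq; exists (c, q); first exact: inN.
  split => /=.
  - by apply: pne1; rewrite eq_sym.
  - by apply: pne2; move: hq; clear; lia.
  - by clear; lia.
  - by move: hq; clear; lia.
move/hasPn: hq => hq.
case: xAB => xX.
- move: (kA xX) => /= [kA' /andP [tl tm]].
  have Ha : anc TA s k := anc_sideS_A sS kA' kS hq.
  case: Hc => [Ec|[Ec|Ec]]; subst c.
  + have tl' : l < t by move: tc tl; clear; lia.
    case: IA => _ _ _ _ [IL _].
    have [[y1 y2] yA [Y1 Y2 Y3 Y4]] := IL t k s xX tl' Ha.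
    exists (y1, y2); first exact: inA.
    by split => //=; move: Y3 Y4 => /=; clear; lia.
  + have tm' : t < m by move: tc tm; clear; lia.
    case: IA => _ _ _ _ [_ IR].
    have [[y1 y2] yA [Y1 Y2 Y3 Y4]] := IR t k s xX tm' Ha.
    exists (y1, y2); first exact: inA.
    by split => //=; move: Y3 Y4 => /=; clear; lia.
  + exists (m, s); first by apply: inN; auto.
    split => /=.
    * by apply: pne2; rewrite eq_sym.
    * by apply: pne1; move: Hmr; clear; lia.
    * by move: tm Hmr; clear; lia.
    * by clear; lia.
- move: (kB xX) => /= [kB' /andP [tl tr]].
  have Ha : anc TB s k := anc_sideS_B sS kB' kS hq.
  have [Ec|cm] : c = r \/ c <= m by move: Hc Hlm; clear; lia.
  + subst c.
    have tr' : t < r by move: tc tr; clear; lia.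
    case: IB => _ _ _ _ [_ IR].
    have [[y1 y2] yB [Y1 Y2 Y3 Y4]] := IR t k s xX tr' Ha.
    exists (y1, y2); first exact: inB.
    by split => //=; move: Y3 Y4 => /=; clear; lia.
  + case: (ltngtP t m.+1) => tm.
    * by move: tm tl; clear; lia.
    * case: IB => _ _ _ _ [IL _].
      have [[y1 y2] yB [Y1 Y2 Y3 Y4]] := IL t k s xX tm Ha.
      exists (y1, y2); first exact: inB.
      split => //=.
      - by apply: pne1; move: Y3 cm => /=; clear; lia.
      - by move: Y3 cm => /=; clear; lia.
      - by move: Y4 => /=; clear; lia.
    * subst t; case: IB => _ _ CL _ _.
      have H := CL k s xX Ha.
      exists (m.+1, s); first exact: inB.
      split => /=.
      - by apply: pne2; rewrite eq_sym.
      - by apply: pne1; move: cm; clear; lia.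
      - by move: cm; clear; lia.
      - by clear; lia.
Qed.

Lemma satX x y : x \in XX -> y \in XX -> x.1 != y.1 -> x.2 != y.2 -> good XX x y.
Proof.
move=> /memX Hx /memX Hy xy1 xy2.
have e1 : y.1 != x.1 by rewrite eq_sym.
have e2 : y.2 != x.2 by rewrite eq_sym.
case: Hx => [xA|xB|xN]; case: Hy => [yA|yB|yN].
- case: IA => _ H _ _ _; have [z zA Hz] := H x y xA yA xy1 xy2; exists z => //; exact: inA.
- exact: sat_AB.
- by apply: sat_ON => //; left.
- by apply: good_sym; apply: sat_AB.
- case: IB => _ H _ _ _; have [z zB Hz] := H x y xB yB xy1 xy2; exists z => //; exact: inB.
- by apply: sat_ON => //; right.
- by apply: good_sym; apply: sat_ON => //; left.
- by apply: good_sym; apply: sat_ON => //; right.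
- exact: sat_NN.
Qed.

Lemma CLX k a : (l,k) \in XX -> anc T a k -> (l,a) \in XX.
Proof.
move=> H Ha; case: (boolP (a \in S)) => aS; first by apply: inN; auto.
have kS : k \notin S.
  apply/negP => kS; move/negP: aS; apply; exact: (anc_up closT Ha kS).
case/memX: H => [H|H|[/= H _]]; last by rewrite H in kS.
- move: (kA H) => /= [kA' _]; have [H1 _] := anc_sideN aS Ha.
  case: IA => _ _ HC _ _; apply: inA; exact: (HC k a H (H1 kA')).
- move: (kB H) => /= [_ /andP [H1 _]]; move: H1 Hlm => /=; clear; lia.
Qed.

Lemma CRX k a : (r,k) \in XX -> anc T a k -> (r,a) \in XX.
Proof.
move=> H Ha; case: (boolP (a \in S)) => aS; first by apply: inN; auto.
have kS : k \notin S.
  apply/negP => kS; move/negP: aS; apply; exact: (anc_up closT Ha kS).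
case/memX: H => [H|H|[/= H _]]; last by rewrite H in kS.
- move: (kA H) => /= [_ /andP [_ H1]]; move: H1 Hmr => /=; clear; lia.
- move: (kB H) => /= [kB' _]; have [_ H1] := anc_sideN aS Ha.
  case: IB => _ _ _ HC _; apply: inB; exact: (HC k a H (H1 kB')).
Qed.

Lemma ILX t k s : (t,k) \in XX -> l < t -> anc T s k ->
  exists2 y, y \in XX & [/\ y != (t,k), y != (l,s), l <= y.1 <= t & minn s k <= y.2 <= maxn s k].
Proof.
move=> H lt Ha.
have sk : s != k := anc_neq bT Ha.
case: (boolP (k \in S)) => kS.
  exists (l,k); first by apply: inN; auto.
  split => /=.
  - by apply: pne1; move: lt; clear; lia.
  - by apply: pne2; rewrite eq_sym.
  - by move: lt; clear; lia.
  - by clear; lia.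
case: (boolP (has (fun q => (s < q < k) || (k < q < s)) S)) => hq.
  case/hasP: hq => q qS hq; exists (l, q); first by apply: inN; auto.
  split => /=.
  - by apply: pne2; move: hq; clear; lia.
  - by apply: pne2; move: hq; clear; lia.
  - by move: lt; clear; lia.
  - by move: hq; clear; lia.
move/hasPn: hq => hq.
have [HA HB] := anc_side Ha kS hq.
case/memX: H => [H|H|[/= H _]]; last by rewrite H in kS.
- move: (kA H) => /= [kA' _]; case: IA => _ _ _ _ [IL _].
  have [y yA Hy] := IL t k s H lt (HA kA'); exists y => //; exact: inA.
- move: (kB H) => /= [kB' /andP [t1 t2]].
  case: (ltngtP t m.+1) => tm.
  + by move: tm t1; clear; lia.
  + case: IB => _ _ _ _ [IL _].
    have [[y1 y2] yB [Y1 Y2 Y3 Y4]] := IL t k s H tm (HB kB').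
    exists (y1, y2); first exact: inB.
    split => //=.
    * by apply: pne1; move: Y3 Hlm => /=; clear; lia.
    * by move: Y3 Hlm => /=; clear; lia.
  + subst t; case: IB => _ _ CL _ _.
    have H' := CL k s H (HB kB').
    exists (m.+1, s); first exact: inB.
    split => /=.
    * exact: pne2.
    * by apply: pne1; move: Hlm; clear; lia.
    * by move: Hlm; clear; lia.
    * by clear; lia.
Qed.

Lemma IRX t k s : (t,k) \in XX -> t < r -> anc T s k ->
  exists2 y, y \in XX & [/\ y != (t,k), y != (r,s), t <= y.1 <= r & minn s k <= y.2 <= maxn s k].
Proof.
move=> H lt Ha.
have sk : s != k := anc_neq bT Ha.
case: (boolP (k \in S)) => kS.
  exists (r,k); first by apply: inN; auto.
  split => /=.
  - by apply: pne1; move: lt; clear; lia.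
  - by apply: pne2; rewrite eq_sym.
  - by move: lt; clear; lia.
  - by clear; lia.
case: (boolP (has (fun q => (s < q < k) || (k < q < s)) S)) => hq.
  case/hasP: hq => q qS hq; exists (r, q); first by apply: inN; auto.
  split => /=.
  - by apply: pne2; move: hq; clear; lia.
  - by apply: pne2; move: hq; clear; lia.
  - by move: lt; clear; lia.
  - by move: hq; clear; lia.
move/hasPn: hq => hq.
have [HA HB] := anc_side Ha kS hq.
case/memX: H => [H|H|[/= H _]]; last by rewrite H in kS.
- move: (kA H) => /= [kA' /andP [t1 t2]].
  case: (ltngtP t m) => tm.
  + case: IA => _ _ _ _ [_ IR].
    have [[y1 y2] yA [Y1 Y2 Y3 Y4]] := IR t k s H tm (HA kA').
    exists (y1, y2); first exact: inA.
    split => //=.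
    * by apply: pne1; move: Y3 Hmr => /=; clear; lia.
    * by move: Y3 Hmr => /=; clear; lia.
  + by move: tm t2; clear; lia.
  + subst t; case: IA => _ _ _ CR _.
    have H' := CR k s H (HA kA').
    exists (m, s); first exact: inA.
    split => /=.
    * exact: pne2.
    * by apply: pne1; move: Hmr; clear; lia.
    * by move: Hmr; clear; lia.
    * by clear; lia.
- move: (kB H) => /= [kB' _]; case: IB => _ _ _ _ [_ IR].
  have [y yB Hy] := IR t k s H lt (HB kB'); exists y => //; exact: inB.
Qed.

Lemma KX y : y \in XX -> (y.2 \in keys T) /\ (l <= y.1 <= r).
Proof.
case/memX => [H|H|[H1 H2]].
- move: (kA H) => /= [H1 H2]; split; first by rewrite kT H1.
  by move: H2 Hmr; clear; lia.
- move: (kB H) => /= [H1 H2]; split; first by rewrite kT H1 orbT.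
  by move: H2 Hlm; clear; lia.
- split; first exact: SkT.
  by move: H2 Hlm Hmr; clear; lia.
Qed.

Lemma InvX : Inv XX T l r.
Proof.
split.
- exact: KX.
- exact: satX.
- exact: CLX.
- exact: CRX.
- split; [exact: ILX | exact: IRX].
Qed.

End Merge.

Lemma nleaves_gt0 st : 0 < nleaves st.
Proof. by elim: st => //= a Ha b Hb; rewrite addn_gt0 Ha. Qed.

Lemma am_orig (M : merge_fun) (pi : seq nat) st off i :
  off < i <= off + nleaves st -> (i, nth 0 pi i.-1) \in arboral_mergesort M pi st off.
Proof.
elim: st off i => [|a IHa b IHb] off i /= Hi.
  have -> : i = off.+1 by move: Hi; clear; lia.
  by rewrite inE.
have ga := nleaves_gt0 a; have gb := nleaves_gt0 b.
have An : arboral_mergesort M pi a off != [::].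
  apply/eqP => E; have H := IHa off off.+1; rewrite E in H.
  have H2 : off < off.+1 <= off + nleaves a by move: ga; clear; lia.
  by move: (H H2).
have Bn : arboral_mergesort M pi b (off + nleaves a) != [::].
  apply/eqP => E; have H := IHb (off + nleaves a) (off + nleaves a).+1; rewrite E in H.
  have H2 : off + nleaves a < (off + nleaves a).+1 <= off + nleaves a + nleaves b by move: gb; clear; lia.
  by move: (H H2).
rewrite (negbTE An) (negbTE Bn) !mem_cat.
case: (leqP i (off + nleaves a)) => H.
- by rewrite IHa //; move: Hi H; clear; lia.
- by rewrite IHb ?orbT //; move: Hi H; clear; lia.
Qed.

Lemma Inv_leaf p c : Inv [:: (c, p)] (Node Leaf p Leaf) c c.
Proof.
have noanc : forall a k, ~ anc (Node Leaf p Leaf) a k.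
  move=> a k [L [R [Hs Hk]]]; case/subtree_inv: Hs => [E|[E|E]].
  - by case: E => EL _ ER; subst L R; case: Hk.
  - by move/subtree_leaf: E.
  - by move/subtree_leaf: E.
split.
- by move=> y; rewrite inE => /eqP -> /=; rewrite inE eqxx leqnn.
- by move=> x y; rewrite !inE => /eqP -> /eqP ->; rewrite eqxx.
- by move=> k a _ /noanc.
- by move=> k a _ /noanc.
- by split => t k s; rewrite inE => /eqP [-> _]; rewrite ltnn.
Qed.

Lemma main (M : merge_fun) (pi : seq nat) (HM : is_bst_merge M) (upi : uniq pi) st off :
  off + nleaves st <= size pi ->
  [/\ bst (bst_mergesort M pi st off), bst_mergesort M pi st off <> Leaf,
      (forall x, (x \in keys (bst_mergesort M pi st off)) = (x \in take (nleaves st) (drop off pi)))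
    & Inv (arboral_mergesort M pi st off) (bst_mergesort M pi st off) off.+1 (off + nleaves st)].
Proof.
elim: st off => [|a IHa b IHb] off Hs.
- have Hd : drop off pi = nth 0 pi off :: drop off.+1 pi.
    by apply: drop_nth; move: Hs => /=; clear; lia.
  split => //=.
  + by move=> x; rewrite Hd /= take0.
  + by rewrite addn1; apply: Inv_leaf.
- rewrite [nleaves _]/= in Hs *.
  set na := nleaves a in Hs *; set nb := nleaves b in Hs *.
  have ga : 0 < na := nleaves_gt0 a; have gb : 0 < nb := nleaves_gt0 b.
  have Ha1 : off + na <= size pi by move: Hs; clear; lia.
  have Hb1 : off + na + nb <= size pi by move: Hs; clear; lia.
  have [bA nA kA' IA] := IHa off Ha1.
  have [bB nB kB' IB] := IHb (off + na) Hb1.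
  set TA := bst_mergesort M pi a off in bA nA kA' IA.
  set TB := bst_mergesort M pi b (off + na) in bB nB kB' IB.
  have dis : forall x, x \in keys TA -> x \notin keys TB.
    have U : uniq (take (na + nb) (drop off pi)) by apply: take_uniq; apply: drop_uniq.
    rewrite takeD drop_drop (addnC na off) cat_uniq in U.
    case/and3P: U => _ U _.
    move=> x; rewrite kA' kB' => xA; apply/negP => xB.
    by move/hasPn: U => /(_ x xB) /=; rewrite xA.
  move: (HM TA TB bA bB nA nB dis) => /= [bT kT [Sa [Sb [[tA tB] SE tT hg bnd]]]].
  have An : arboral_mergesort M pi a off != [::].
    apply/eqP => E; have H := @am_orig M pi a off off.+1; rewrite E in H.
    have H2 : off < off.+1 <= off + nleaves a by move: ga; clear; lia.
    by move: (H H2).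
  have Bn : arboral_mergesort M pi b (off + na) != [::].
    apply/eqP => E; have H := @am_orig M pi b (off + na) (off + na).+1; rewrite E in H.
    have H2 : off + na < (off + na).+1 <= off + na + nleaves b by move: gb; clear; lia.
    by move: (H H2).
  have Hlm : off.+1 <= off + na by move: ga; clear; lia.
  have Hmr : off + na < off + na + nb by move: gb; clear; lia.
  have HI := @InvX _ _ TA TB _ _ off.+1 (off + na) (off + na + nb) Sa Sb Hlm Hmr IA IB bA bB bT
    dis kT tA tB SE tT hg bnd.
  split.
  + exact: bT.
  + have [x xA] : exists x, x \in keys TA.
      by case: (TA) nA => [|L x R] // _; exists x; rewrite /= mem_cat inE eqxx orbT.
    move=> E; move: (kT x); rewrite xA /=.
    by rewrite /= -/TA -/TB E.
  + by move=> x; rewrite kT kA' kB' takeD mem_cat drop_drop (addnC na off).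
  + rewrite /= -/na -/nb -/TA -/TB (negbTE An) (negbTE Bn) addnA.
    exact: HI.
Qed.

Theorem lemma1 (M : merge_fun) (n : nat) (pi : seq nat) (st : split_tree) :
  is_bst_merge M ->
  perm_eq pi (iota 1 n) ->
  nleaves st = n ->
  let P := arboral_mergesort M pi st 0 in
  arborally_satisfied P /\
  (forall i, 0 < i <= n -> (i, nth 0 pi i.-1) \in P).
Proof.
move=> HM Hp Hn P.
have upi : uniq pi by rewrite (perm_uniq Hp) iota_uniq.
have sz : size pi = n by rewrite (perm_size Hp) size_iota.
have Hs : 0 + nleaves st <= size pi by rewrite Hn sz.
have [_ _ _ [_ Sat _ _ _]] := main HM upi Hs.
split.
- exact: Sat.
- move=> i Hi; apply: am_orig; rewrite Hn; exact: Hi.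
Qed.
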